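(* (1) If $t_1 : X_1 \to X'_1$ with proof label $\theta_1$ and $t_2 : X_2\to X'_2$ with proof label $\theta_2$ are connected CCSK$^{\mathrm P}$ transitions (each forward or backward), then $\theta_1\frown\theta_2$. (2) If $\theta_1\frown\theta_2$, then there exist CCSK$^{\mathrm P}$ transitions $t_1: X_1\to X'_1$ with proof label $\theta_1$ and $t_2: X_2\to X'_2$ with proof label $\theta_2$ (each forward or backward) such that $t_1$ and $t_2$ are connected.
   Context: Names $\mathsf N$ with a bijection $\overline{\cdot}$ onto disjoint co-names $\overline{\mathsf N}$; labels $\mathsf L=\mathsf N\cup\overline{\mathsf N}\cup\{\tau\}$ ($\alpha$ ranges over $\mathsf L$, $\lambda$ over $\mathsf L\setminus\{\tau\}$, $\overline\tau=\tau$); $\mathsf K$ a denumerable set of keys. CCSK processes: $X,Y::=\mathbf 0\mid\alpha.X\mid X\backslash\lambda\mid X+Y\mid X|Y\mid\alpha[k].X$; $\mathrm{keys}(X)$ is the set of keys occurring in $X$; $X$ is standard if $\mathrm{keys}(X)=\emptyset$. Directions $D\in\{\mathrm L,\mathrm R\}$, $\bar{\mathrm L}=\mathrm R$, $\bar{\mathrm R}=\mathrm L$. Proof keyed labels: $\theta::=\upsilon\,\alpha[k]\mid\upsilon\langle\upsilon_1\lambda[k],\upsilon_2\overline\lambda[k]\rangle$ with $\upsilon,\upsilon_1,\upsilon_2\in\{|_{\mathrm L},|_{\mathrm R},+_{\mathrm L},+_{\mathrm R}\}^*$; $\ell(\upsilon\alpha[k])=\alpha$, $\ell(\upsilon\langle\cdots\rangle)=\tau$,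 $\mathrm{key}(\theta)=k$. Forward transitions $X\xrightarrow{\theta}X'$ of CCSK$^{\mathrm P}$ form the least relation closed under: (act) $\alpha.X\xrightarrow{\alpha[k]}\alpha[k].X$ for any $k$, if $\mathrm{keys}(X)=\emptyset$; (pre) if $X\xrightarrow\theta X'$ and $\mathrm{key}(\theta)\ne k$ then $\alpha[k].X\xrightarrow\theta\alpha[k].X'$; (res) if $X\xrightarrow\theta X'$ and $\ell(\theta)\notin\{\lambda,\overline\lambda\}$ then $X\backslash\lambda\xrightarrow\theta X'\backslash\lambda$; (par) if $X\xrightarrow\theta X'$ and $\mathrm{key}(\theta)\notin\mathrm{keys}(Y)$ then $X|Y\xrightarrow{|_{\mathrm L}\theta}X'|Y$ and $Y|X\xrightarrow{|_{\mathrm R}\theta}Y|X'$; (syn) if $X\xrightarrow{\upsilon_1\lambda[k]}X'$ and $Y\xrightarrow{\upsilon_2\overline\lambda[k]}Y'$ then $X|Y\xrightarrow{\langle\upsilon_1\lambda[k],\upsilon_2\overline\lambda[k]\rangle}X'|Y'$; (sum) if $X\xrightarrow\theta X'$ and $\mathrm{keys}(Y)=\emptyset$ then $X+Y\xrightarrow{+_{\mathrm L}\theta}X'+Y$ and $Y+X\xrightarrow{+_{\mathrm R}\theta}Y+X'$. Backward transitions are the converse: a backward transition from $Y$ to $X$ with label $\theta$ exists iff $X\xrightarrow\theta Y$. A transition has a source, target and proof label; a path is a finite sequence of (forward or backward) transitions each of whose target is the source of the next. A process is reachable if there is a path from a standard process to it; only reachable processes are considered. Transitions $t_1,t_2$ are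 connected if there is a path from the source of one to the target of the other. Connectivity $\frown$ on proof keyed labels is the least relation closed under (a label ''is a prefix'' if it has the form $\beta[k']$; $\theta_{\mathrm L},\theta_{\mathrm R}$ are the components of a synchronisation label): (A1) $\alpha[k]\frown\theta$; (A2) $\theta\frown\alpha[k]$ if $\theta$ is not a prefix; (P1) $|_D\theta\frown|_D\theta'$ if $\theta\frown\theta'$; (P2) $|_D\theta\frown|_{\bar D}\theta'$; (C1) $+_D\theta\frown+_D\theta'$ if $\theta\frown\theta'$; (C2) $+_D\theta\frown+_{\bar D}\theta'$; (S1) $|_D\theta\frown\langle\theta_{\mathrm L},\theta_{\mathrm R}\rangle$ if $\theta\frown\theta_D$; (S2) $\langle\theta_{\mathrm L},\theta_{\mathrm R}\rangle\frown|_D\theta$ if $\theta_D\frown\theta$; (S3) $\langle\theta_1,\theta_2\rangle\frown\langle\theta'_1,\theta'_2\rangle$ if $\theta_1\frown\theta'_1$ and $\theta_2\frown\theta'_2$. *)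

(* Defs.v *)
From Stdlib Require Import List Relation_Operators.
Import ListNotations.

(* Names N = nat, co-names are their bar-images; keys K = nat. *)
Definition name := nat.
Definition key := nat.

Inductive vis : Type := VN (a : name) | VC (a : name).
Inductive label : Type := Vis (l : vis) | Tau.

Definition co_vis (l : vis) : vis :=
  match l with VN a => VC a | VC a => VN a end.
Definition co_label (a : label) : label :=
  match a with Vis l => Vis (co_vis l) | Tau => Tau end.

Inductive proc : Type :=
| Nil : proc
| Pref : label -> proc -> proc
| Res : proc -> vis -> proc
| Sum : proc -> proc -> proc
| Par : proc -> proc -> proc
| Done : label -> key -> proc -> proc.    (* alpha[k].X *)

Fixpoint keys (X : proc) : list key :=
  match X with
  | Nil => []
  | Pref _ X => keys X
  | Res X _ => keys X
  | Sum X Y => keys X ++ keys Y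
  | Par X Y => keys X ++ keys Y
  | Done _ k X => k :: keys X
  end.

Definition standard (X : proc) : Prop := keys X = [].

Inductive side : Type := SL | SR.
Definition co_side (d : side) : side := match d with SL => SR | SR => SL end.

Inductive op : Type := OPar (d : side) | OSum (d : side).

(* proof keyed labels:
   PAct u a k           = u alpha[k]
   PSyn u u1 l u2 k     = u < u1 lambda[k] , u2 co-lambda[k] > *)
Inductive plabel : Type :=
| PAct : list op -> label -> key -> plabel
| PSyn : list op -> list op -> vis -> list op -> key -> plabel.

Definition lab (t : plabel) : label :=
  match t with PAct _ a _ => a | PSyn _ _ _ _ _ => Tau end.
Definition pkey (t : plabel) : key :=
  match t with PAct _ _ k => k | PSyn _ _ _ _ k => k end.

Definition pre_op (o : op) (t : plabel) : plabel :=
  match t with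
  | PAct u a k => PAct (o :: u) a k
  | PSyn u u1 l u2 k => PSyn (o :: u) u1 l u2 k
  end.
Definition ppar (d : side) := pre_op (OPar d).
Definition psum (d : side) := pre_op (OSum d).

Definition psyn (u1 : list op) (l : vis) (u2 : list op) (k : key) : plabel :=
  PSyn [] u1 l u2 k.
Definition comp (d : side) (u1 : list op) (l : vis) (u2 : list op) (k : key)
  : plabel :=
  match d with
  | SL => PAct u1 (Vis l) k
  | SR => PAct u2 (Vis (co_vis l)) k
  end.

Definition is_prefix (t : plabel) : Prop :=
  exists a k, t = PAct [] a k.

Inductive fwd : proc -> plabel -> proc -> Prop :=
| f_act : forall a X k, standard X -> fwd (Pref a X) (PAct [] a k) (Done a k X)
| f_pre : forall a k X t X', fwd X t X' -> pkey t <> k ->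
    fwd (Done a k X) t (Done a k X')
| f_res : forall X t X' l, fwd X t X' ->
    lab t <> Vis l -> lab t <> Vis (co_vis l) ->
    fwd (Res X l) t (Res X' l)
| f_parL : forall X t X' Y, fwd X t X' -> ~ In (pkey t) (keys Y) ->
    fwd (Par X Y) (ppar SL t) (Par X' Y)
| f_parR : forall X t X' Y, fwd X t X' -> ~ In (pkey t) (keys Y) ->
    fwd (Par Y X) (ppar SR t) (Par Y X')
| f_syn : forall X X' Y Y' u1 u2 l k,
    fwd X (PAct u1 (Vis l) k) X' ->
    fwd Y (PAct u2 (Vis (co_vis l)) k) Y' ->
    fwd (Par X Y) (psyn u1 l u2 k) (Par X' Y')
| f_sumL : forall X t X' Y, fwd X t X' -> standard Y ->
    fwd (Sum X Y) (psum SL t) (Sum X' Y)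
| f_sumR : forall X t X' Y, fwd X t X' -> standard Y ->
    fwd (Sum Y X) (psum SR t) (Sum Y X').

Inductive direction : Type := Fw | Bw.
Record trans : Type := mkTrans {
  tdir : direction; tsrc : proc; tlab : plabel; ttgt : proc }.

Definition valid (t : trans) : Prop :=
  match tdir t with
  | Fw => fwd (tsrc t) (tlab t) (ttgt t)
  | Bw => fwd (ttgt t) (tlab t) (tsrc t)
  end.

Definition step (X Y : proc) : Prop :=
  exists t, fwd X t Y \/ fwd Y t X.
Definition path (X Y : proc) : Prop := clos_refl_trans proc step X Y.

Definition reachable (X : proc) : Prop :=
  exists S, standard S /\ path S X.

Definition connected (t1 t2 : trans) : Prop :=
  path (tsrc t1) (ttgt t2) \/ path (tsrc t2) (ttgt t1).

Inductive conn : plabel -> plabel -> Prop :=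
| A1 : forall a k t, conn (PAct [] a k) t
| A2 : forall t a k, ~ is_prefix t -> conn t (PAct [] a k)
| P1 : forall d t t', conn t t' -> conn (ppar d t) (ppar d t')
| P2 : forall d t t', conn (ppar d t) (ppar (co_side d) t')
| C1 : forall d t t', conn t t' -> conn (psum d t) (psum d t')
| C2 : forall d t t', conn (psum d t) (psum (co_side d) t')
| S1 : forall d t u1 l u2 k, conn t (comp d u1 l u2 k) ->
    conn (ppar d t) (psyn u1 l u2 k)
| S2 : forall d t u1 l u2 k, conn (comp d u1 l u2 k) t ->
    conn (psyn u1 l u2 k) (ppar d t)
| S3 : forall u1 l u2 k u1' l' u2' k',
    conn (comp SL u1 l u2 k) (comp SL u1' l' u2' k') ->
    conn (comp SR u1 l u2 k) (comp SR u1' l' u2' k') ->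
    conn (psyn u1 l u2 k) (psyn u1' l' u2' k').

(* Main.v *)
Require Import Defs.
From Stdlib Require Import List Relation_Operators Lia.
Import ListNotations.

Lemma path_refl X : path X X. Proof. apply rt_refl. Qed.
Lemma path_trans X Y Z : path X Y -> path Y Z -> path X Z.
Proof. intros; eapply rt_trans; eauto. Qed.
Lemma path_fwd X t Y : fwd X t Y -> path X Y.
Proof. intros; apply rt_step; exists t; auto. Qed.
Lemma path_bwd X t Y : fwd X t Y -> path Y X.
Proof. intros; apply rt_step; exists t; auto. Qed.
Lemma path_sym X Y : path X Y -> path Y X.
Proof.
  induction 1.
  - destruct H as [t [H|H]]; [eapply path_bwd|eapply path_fwd]; eauto.
  - apply path_refl.
  - eapply path_trans; eauto.
Qed.

Definition kid1 (P : proc) : proc :=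
  match P with Pref _ X | Done _ _ X | Res X _ | Sum X _ | Par X _ => X | Nil => Nil end.
Definition kid2 (P : proc) : proc :=
  match P with Sum _ Y | Par _ Y => Y | _ => Nil end.
Definition cls (P : proc) : nat :=
  match P with Nil => 0 | Pref _ _ | Done _ _ _ => 1 | Res _ _ => 2 | Sum _ _ => 3 | Par _ _ => 4 end.

Lemma fwd_proj P t Q : fwd P t Q ->
  cls P = cls Q /\ path (kid1 P) (kid1 Q) /\ path (kid2 P) (kid2 Q).
Proof.
  induction 1; simpl; repeat split; auto using path_refl;
    eapply path_fwd; eauto.
Qed.

Lemma path_proj P Q : path P Q ->
  cls P = cls Q /\ path (kid1 P) (kid1 Q) /\ path (kid2 P) (kid2 Q).
Proof.
  induction 1.
  - destruct H as [t [H|H]].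
    + apply (fwd_proj _ _ _ H).
    + destruct (fwd_proj _ _ _ H) as [? [? ?]]; repeat split; auto using path_sym.
  - repeat split; apply path_refl.
  - destruct IHclos_refl_trans1 as [? [? ?]], IHclos_refl_trans2 as [? [? ?]].
    repeat split; try congruence; eapply path_trans; eauto.
Qed.

Lemma conn_prefix_r t a k : conn t (PAct [] a k).
Proof.
  destruct t as [u b k'|u u1 l u2 k'].
  - destruct u. + apply A1. + apply A2. intros [a' [k'' H]]; discriminate.
  - apply A2. intros [a' [k'' H]]; discriminate.
Qed.

Lemma part1 : forall A1 th1 B1 A2 th2 B2, path A1 A2 -> fwd A1 th1 B1 ->
  fwd A2 th2 B2 -> conn th1 th2.
Proof.
  induction A1 as [|a X IH|X IH l|X IHX Y IHY|X IHX Y IHY|a k X IH];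
    intros th1 B1 A2 th2 B2 Hp H1 H2; inversion H1; subst.
  - apply A1.
  - apply path_proj in Hp. destruct A2; simpl in Hp; destruct Hp as [Hc [Hp1 Hp2]];
      try discriminate; inversion H2; subst. eapply IH; eauto.
  - apply path_proj in Hp. destruct A2; simpl in Hp; destruct Hp as [Hc [Hp1 Hp2]];
      try discriminate; inversion H2; subst.
    + apply C1; eapply IHX; eauto.
    + exact (C2 SL _ _).
  - apply path_proj in Hp. destruct A2; simpl in Hp; destruct Hp as [Hc [Hp1 Hp2]];
      try discriminate; inversion H2; subst.
    + exact (C2 SR _ _).
    + apply C1; eapply IHY; eauto.
  - apply path_proj in Hp. destruct A2; simpl in Hp; destruct Hp as [Hc [Hp1 Hp2]];
      try discriminate; inversion H2; subst.
    + apply P1; eapply IHX; eauto.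
    + exact (P2 SL _ _).
    + apply (S1 SL); simpl; eapply IHX; eauto.
  - apply path_proj in Hp. destruct A2; simpl in Hp; destruct Hp as [Hc [Hp1 Hp2]];
      try discriminate; inversion H2; subst.
    + exact (P2 SR _ _).
    + apply P1; eapply IHY; eauto.
    + apply (S1 SR); simpl; eapply IHY; eauto.
  - apply path_proj in Hp. destruct A2; simpl in Hp; destruct Hp as [Hc [Hp1 Hp2]];
      try discriminate; inversion H2; subst.
    + apply (S2 SL); simpl; eapply IHX; eauto.
    + apply (S2 SR); simpl; eapply IHY; eauto.
    + apply S3; simpl; [eapply IHX|eapply IHY]; eauto.
  - apply path_proj in Hp. destruct A2; simpl in Hp; destruct Hp as [Hc [Hp1 Hp2]];
      try discriminate; inversion H2; subst.
    + apply conn_prefix_r.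
    + eapply IH; eauto.
Qed.

Lemma pkey_pre o t : pkey (pre_op o t) = pkey t.
Proof. destruct t; reflexivity. Qed.

Lemma std_nil : standard Nil. Proof. reflexivity. Qed.
Lemma std_par X Y : standard X -> standard Y -> standard (Par X Y).
Proof. unfold standard; simpl; intros -> ->; reflexivity. Qed.
Lemma std_sum X Y : standard X -> standard Y -> standard (Sum X Y).
Proof. unfold standard; simpl; intros -> ->; reflexivity. Qed.

Lemma nin_nil k : ~ In k (keys Nil). Proof. simpl; tauto. Qed.
Lemma nin_std k X : standard X -> ~ In k (keys X).
Proof. unfold standard; intros ->; simpl; tauto. Qed.

Lemma wrap1 o th S B : standard S -> fwd S th B ->
  exists S' B', standard S' /\ fwd S' (pre_op o th) B'.
Proof.
  intros Hs Hf. destruct o as [[|]|[|]].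
  - exists (Par S Nil), (Par B Nil); split. apply std_par; auto using std_nil.
    apply (f_parL S th B Nil Hf (nin_nil _)).
  - exists (Par Nil S), (Par Nil B); split. apply std_par; auto using std_nil.
    apply (f_parR S th B Nil Hf (nin_nil _)).
  - exists (Sum S Nil), (Sum B Nil); split. apply std_sum; auto using std_nil.
    apply (f_sumL S th B Nil Hf std_nil).
  - exists (Sum Nil S), (Sum Nil B); split. apply std_sum; auto using std_nil.
    apply (f_sumR S th B Nil Hf std_nil).
Qed.

Lemma realize_act u a k : exists S B, standard S /\ fwd S (PAct u a k) B.
Proof.
  induction u as [|o u IH].
  - exists (Pref a Nil), (Done a k Nil); split. reflexivity. apply f_act; reflexivity.
  - destruct IH as [S [B [Hs Hf]]]. exact (wrap1 o _ _ _ Hs Hf).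
Qed.

Lemma realize th : exists S B, standard S /\ fwd S th B.
Proof.
  destruct th as [u a k|u u1 l u2 k].
  - apply realize_act.
  - induction u as [|o u IH].
    + destruct (realize_act u1 (Vis l) k) as [S1 [B1 [H1 F1]]].
      destruct (realize_act u2 (Vis (co_vis l)) k) as [S2 [B2 [H2 F2]]].
      exists (Par S1 S2), (Par B1 B2); split. apply std_par; auto.
      exact (f_syn _ _ _ _ _ _ _ _ F1 F2).
    + destruct IH as [S [B [Hs Hf]]]. exact (wrap1 o _ _ _ Hs Hf).
Qed.

Inductive kpath (K : list key) : proc -> proc -> Prop :=
| kp_refl X : kpath K X X
| kp_step X t Y Z : fwd X t Y -> ~ In (pkey t) K -> kpath K Y Z -> kpath K X Z.

Lemma kpath_path K X Y : kpath K X Y -> path X Y.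
Proof.
  induction 1. apply rt_refl. eapply rt_trans; eauto. apply rt_step; exists t; auto.
Qed.

Lemma kpath_trans K X Y Z : kpath K X Y -> kpath K Y Z -> kpath K X Z.
Proof. induction 1; intros; auto. eapply kp_step; eauto. Qed.

Lemma kpath_mono K K' X Y : kpath K X Y -> (forall k, In k K' -> In k K) -> kpath K' X Y.
Proof. induction 1; intros Hi. constructor. eapply kp_step; eauto. Qed.

Lemma kpath_parL K X X' Y : kpath K X X' -> (forall k, In k (keys Y) -> In k K) ->
  kpath K (Par X Y) (Par X' Y).
Proof.
  induction 1; intros Hi. constructor.
  eapply kp_step. apply (f_parL X t Y0 Y); eauto. unfold ppar; rewrite pkey_pre; auto.
  auto.
Qed.
Lemma kpath_parR K X X' Y : kpath K X X' -> (forall k, In k (keys Y) -> In k K) ->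
  kpath K (Par Y X) (Par Y X').
Proof.
  induction 1; intros Hi. constructor.
  eapply kp_step. apply (f_parR X t Y0 Y); eauto. unfold ppar; rewrite pkey_pre; auto.
  auto.
Qed.
Lemma kpath_sumL K X X' Y : kpath K X X' -> standard Y ->
  kpath K (Sum X Y) (Sum X' Y).
Proof.
  induction 1; intros Hi. constructor.
  eapply kp_step. apply (f_sumL X t Y0 Y); eauto. unfold psum; rewrite pkey_pre; auto.
  auto.
Qed.
Lemma kpath_sumR K X X' Y : kpath K X X' -> standard Y ->
  kpath K (Sum Y X) (Sum Y X').
Proof.
  induction 1; intros Hi. constructor.
  eapply kp_step. apply (f_sumR X t Y0 Y); eauto. unfold psum; rewrite pkey_pre; auto.
  auto.
Qed.

Lemma std_incl X K : standard X -> forall k, In k (keys X) -> In k K.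
Proof. unfold standard; intros -> k []. Qed.

Definition Inv (t1 t2 : plabel) : Prop := forall K : list key,
  exists S A1 B1 A2 B2, standard S /\ kpath K S A1 /\ fwd A1 t1 B1 /\
    kpath K S A2 /\ fwd A2 t2 B2.

Lemma Inv_sym t1 t2 : Inv t1 t2 -> Inv t2 t1.
Proof.
  intros H K; destruct (H K) as (S & A1 & B1 & A2 & B2 & ?&?&?&?&?).
  exists S, A2, B2, A1, B1; tauto.
Qed.

Lemma fresh (L : list nat) : exists n, ~ In n L.
Proof.
  assert (exists n, forall x, In x L -> x < n) as [n Hn].
  { induction L as [|a L [n Hn]]. exists 0; simpl; tauto.
    exists (S (max a n)); simpl; intros x [->|Hx]. lia. specialize (Hn x Hx); lia. }
  exists n; intros H; specialize (Hn n H); lia.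
Qed.

Lemma inv_prefix a k t : Inv (PAct [] a k) t.
Proof.
  intros K. destruct (realize t) as [S0 [B0 [Hs Hf]]].
  destruct (fresh (pkey t :: K)) as [k' Hk'].
  exists (Pref a S0), (Pref a S0), (Done a k S0), (Done a k' S0), (Done a k' B0).
  repeat split; auto.
  - constructor.
  - apply f_act; auto.
  - eapply kp_step. apply (f_act a S0 k' Hs). simpl; intro; apply Hk'; simpl; auto.
    constructor.
  - apply f_pre; auto. intro; apply Hk'; simpl; auto.
Qed.

Lemma inv_S1 d t u1 l u2 k : Inv t (comp d u1 l u2 k) -> Inv (ppar d t) (psyn u1 l u2 k).
Proof.
  intros H K; destruct (H K) as (S & A1 & B1 & A2 & B2 & Hs & P1 & F1 & P2 & F2).
  destruct d; simpl in F2.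
  - destruct (realize_act u2 (Vis (co_vis l)) k) as [T [D [Ht Ft]]].
    exists (Par S T), (Par A1 T), (Par B1 T), (Par A2 T), (Par B2 D).
    repeat split.
    + apply std_par; auto.
    + apply kpath_parL; [assumption|apply std_incl; assumption].
    + apply f_parL; auto using nin_std.
    + apply kpath_parL; [assumption|apply std_incl; assumption].
    + exact (f_syn _ _ _ _ _ _ _ _ F2 Ft).
  - destruct (realize_act u1 (Vis l) k) as [T [D [Ht Ft]]].
    exists (Par T S), (Par T A1), (Par T B1), (Par T A2), (Par D B2).
    repeat split.
    + apply std_par; auto.
    + apply kpath_parR; [assumption|apply std_incl; assumption].
    + apply f_parR; auto using nin_std.
    + apply kpath_parR; [assumption|apply std_incl; assumption].
    + exact (f_syn _ _ _ _ _ _ _ _ Ft F2).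
Qed.

Lemma part2 t1 t2 : conn t1 t2 -> Inv t1 t2.
Proof.
  induction 1.
  - apply inv_prefix.
  - apply Inv_sym, inv_prefix.
  - intros K; destruct (IHconn K) as (S & A1 & B1 & A2 & B2 & Hs & P1 & F1 & P2 & F2).
    destruct d.
    + exists (Par S Nil), (Par A1 Nil), (Par B1 Nil), (Par A2 Nil), (Par B2 Nil).
      split; [apply std_par; auto using std_nil|].
      split; [apply kpath_parL; [assumption|apply std_incl; reflexivity]|].
      split; [apply f_parL; auto using nin_nil|].
      split; [apply kpath_parL; [assumption|apply std_incl; reflexivity]|].
      apply f_parL; auto using nin_nil.
    + exists (Par Nil S), (Par Nil A1), (Par Nil B1), (Par Nil A2), (Par Nil B2).
      split; [apply std_par; auto using std_nil|].
      split; [apply kpath_parR; [assumption|apply std_incl; reflexivity]|].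
      split; [apply f_parR; auto using nin_nil|].
      split; [apply kpath_parR; [assumption|apply std_incl; reflexivity]|].
      apply f_parR; auto using nin_nil.
  - intros K. destruct (realize t) as [S1 [B1 [H1 F1]]].
    destruct (realize t') as [S2 [B2 [H2 F2]]].
    destruct d; simpl.
    + exists (Par S1 S2), (Par S1 S2), (Par B1 S2), (Par S1 S2), (Par S1 B2).
      split; [apply std_par; auto|]. split; [constructor|].
      split; [apply f_parL; auto using nin_std|]. split; [constructor|].
      apply f_parR; auto using nin_std.
    + exists (Par S2 S1), (Par S2 S1), (Par S2 B1), (Par S2 S1), (Par B2 S1).
      split; [apply std_par; auto|]. split; [constructor|].
      split; [apply f_parR; auto using nin_std|]. split; [constructor|].
      apply f_parL; auto using nin_std.
  - intros K; destruct (IHconn K) as (S & A1 & B1 & A2 & B2 & Hs & P1 & F1 & P2 & F2).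
    destruct d.
    + exists (Sum S Nil), (Sum A1 Nil), (Sum B1 Nil), (Sum A2 Nil), (Sum B2 Nil).
      split; [apply std_sum; auto using std_nil|].
      split; [apply kpath_sumL; [assumption|apply std_nil]|].
      split; [apply f_sumL; auto using std_nil|].
      split; [apply kpath_sumL; [assumption|apply std_nil]|].
      apply f_sumL; auto using std_nil.
    + exists (Sum Nil S), (Sum Nil A1), (Sum Nil B1), (Sum Nil A2), (Sum Nil B2).
      split; [apply std_sum; auto using std_nil|].
      split; [apply kpath_sumR; [assumption|apply std_nil]|].
      split; [apply f_sumR; auto using std_nil|].
      split; [apply kpath_sumR; [assumption|apply std_nil]|].
      apply f_sumR; auto using std_nil.
  - intros K. destruct (realize t) as [S1 [B1 [H1 F1]]].
    destruct (realize t') as [S2 [B2 [H2 F2]]].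
    destruct d; simpl.
    + exists (Sum S1 S2), (Sum S1 S2), (Sum B1 S2), (Sum S1 S2), (Sum S1 B2).
      split; [apply std_sum; auto|]. split; [constructor|].
      split; [apply f_sumL; auto|]. split; [constructor|].
      apply f_sumR; auto.
    + exists (Sum S2 S1), (Sum S2 S1), (Sum S2 B1), (Sum S2 S1), (Sum B2 S1).
      split; [apply std_sum; auto|]. split; [constructor|].
      split; [apply f_sumR; auto|]. split; [constructor|].
      apply f_sumL; auto.
  - apply inv_S1; auto.
  - apply Inv_sym, inv_S1, Inv_sym; auto.
  - intros K.
    destruct (IHconn2 K) as (T & C1 & D1 & C2 & D2 & Ht & Q1 & G1 & Q2 & G2).
    destruct (IHconn1 (K ++ keys C1 ++ keys C2)) as (S & A1 & B1 & A2 & B2 & Hs & P1 & F1 & P2 & F2).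
    simpl in *.
    exists (Par S T), (Par A1 C1), (Par B1 D1), (Par A2 C2), (Par B2 D2).
    repeat split.
    + apply std_par; auto.
    + apply kpath_trans with (Par S C1).
      * apply kpath_parR; [assumption|apply std_incl; assumption].
      * apply kpath_mono with (K ++ keys C1 ++ keys C2).
        -- apply kpath_parL; auto. intros; apply in_or_app; right; apply in_or_app; auto.
        -- intros; apply in_or_app; auto.
    + exact (f_syn _ _ _ _ _ _ _ _ F1 G1).
    + apply kpath_trans with (Par S C2).
      * apply kpath_parR; [assumption|apply std_incl; assumption].
      * apply kpath_mono with (K ++ keys C1 ++ keys C2).
        -- apply kpath_parL; auto. intros; apply in_or_app; right; apply in_or_app; auto.
        -- intros; apply in_or_app; auto.
    + exact (f_syn _ _ _ _ _ _ _ _ F2 G2).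
Qed.

Lemma valid_fwd t : valid t ->
  exists A B, fwd A (tlab t) B /\ path (tsrc t) A /\ path (ttgt t) A.
Proof.
  destruct t as [[|] s l g]; unfold valid; simpl; intros H.
  - exists s, g; split; auto. split. apply path_refl. eapply path_bwd; eauto.
  - exists g, s; split; auto. split. eapply path_bwd; eauto. apply path_refl.
Qed.

Theorem proposition4p4 :
  (forall t1 t2 : trans,
      valid t1 -> valid t2 ->
      reachable (tsrc t1) -> reachable (tsrc t2) ->
      connected t1 t2 -> conn (tlab t1) (tlab t2)) /\
  (forall th1 th2 : plabel,
      conn th1 th2 ->
      exists t1 t2 : trans,
        valid t1 /\ valid t2 /\ tlab t1 = th1 /\ tlab t2 = th2 /\
        reachable (tsrc t1) /\ reachable (tsrc t2) /\ connected t1 t2).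
Proof.
  split.
  - intros t1 t2 V1 V2 _ _ Hc.
    destruct (valid_fwd _ V1) as (A1 & B1 & F1 & Ps1 & Pt1).
    destruct (valid_fwd _ V2) as (A2 & B2 & F2 & Ps2 & Pt2).
    apply (part1 A1 _ B1 A2 _ B2); auto.
    destruct Hc as [Hc|Hc].
    + exact (path_trans _ _ _ (path_sym _ _ Ps1) (path_trans _ _ _ Hc Pt2)).
    + apply path_sym.
      exact (path_trans _ _ _ (path_sym _ _ Ps2) (path_trans _ _ _ Hc Pt1)).
  - intros th1 th2 H.
    destruct (part2 _ _ H []) as (S & A1 & B1 & A2 & B2 & Hs & P1 & F1 & P2 & F2).
    exists (mkTrans Fw A1 th1 B1), (mkTrans Fw A2 th2 B2); simpl.
    unfold valid; simpl.
    split; [exact F1|]. split; [exact F2|]. split; [reflexivity|]. split; [reflexivity|].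
    split; [exists S; split; [exact Hs| eapply kpath_path; eauto]|].
    split; [exists S; split; [exact Hs| eapply kpath_path; eauto]|].
    left. eapply path_trans; [apply path_sym; eapply kpath_path; eauto|].
      eapply path_trans; [eapply kpath_path; eauto|]. eapply path_fwd; eauto.
Qed.
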